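(* Let $\mathcal{M}=\langle \mathcal{S},\mathcal{A},\mathcal{P},\mathcal{R},\gamma\rangle$ be a deterministic finite MDP with next-state function $\mathscr{N}$, and let $d_{\sim}$ be the unique function $\mathcal{S}\times\mathcal{S}\to\mathbb{R}$ satisfying $d_{\sim}(s,t)=\max_{a\in\mathcal{A}}\left(|\mathcal{R}(s,a)-\mathcal{R}(t,a)|+\gamma\,d_{\sim}(\mathscr{N}(s,a),\mathscr{N}(t,a))\right)$ for all $s,t$. Let $\mathcal{D}$ be a probability distribution on the set $\mathcal{T}=\mathcal{S}\times\mathcal{S}\times\mathcal{A}$ of transition pairs $\tau_{s,t,a}$ (the pair of transitions $\langle s,a,\mathcal{R}(s,a),\mathscr{N}(s,a)\rangle$, $\langle t,a,\mathcal{R}(t,a),\mathscr{N}(t,a)\rangle$) with $\mathcal{D}(\tau)>0$ for all $\tau\in\mathcal{T}$, and let $\tau_{s_1,t_1,a_1},\tau_{s_2,t_2,a_2},\dots$ be independent samples from $\mathcal{D}$. Let $d_0\equiv 0$ and for $n\ge1$ define $d_n(s,t)=d_{n-1}(s,t)$ for all $(s,t)\neq(s_n,t_n)$ and $$d_n(s_n,t_n)=\max\left(d_{n-1}(s_n,t_n),\ |\mathcal{R}(s_n,a_n)-\mathcal{R}(t_n,a_n)|+\gamma\,d_{n-1}(\mathscr{N}(s_n,a_n),\mathscr{N}(t_n,a_n))\right).$$ Then $\lim_{n\to\infty}d_n=d_{\sim}$ almost surely.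
   Context: A finite MDP has finite state set $\mathcal{S}$, finite action set $\mathcal{A}$, transition kernel $\mathcal{P}$, reward $\mathcal{R}:\mathcal{S}\times\mathcal{A}\to\mathbb{R}$ bounded by $R_{max}$, and discount $\gamma\in[0,1)$. It is deterministic if for every $s,a$ there is a unique $\mathscr{N}(s,a)\in\mathcal{S}$ with $\mathcal{P}(s,a)(\mathscr{N}(s,a))=1$. In this deterministic setting $d_\sim$ coincides with the bisimulation metric of Ferns et al., the unique fixed point of $d\mapsto\max_a(|\mathcal{R}(s,a)-\mathcal{R}(t,a)|+\gamma\mathcal{W}_1(d)(\mathcal{P}(s,a),\mathcal{P}(t,a)))$. *)

(* Defs.v *)
From HB Require Import structures.
From mathcomp Require Import all_boot all_order all_algebra.
From mathcomp Require Import all_classical all_reals all_analysis.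
Set Implicit Arguments. Unset Strict Implicit. Unset Printing Implicit Defensive.
Import Order.TTheory GRing.Theory Num.Theory.
Local Open Scope ring_scope.

(* One application of the bisimulation operator (max over actions;
   default 0 for an empty action set). *)
Definition bisim_op {R : realType} {S A : finType} (rew : S -> A -> R)
  (nxt : S -> A -> S) (gam : R) (d : S -> S -> R) (s t : S) : R :=
  \big[Num.max/0]_(a : A) (`|rew s a - rew t a| + gam * d (nxt s a) (nxt t a)).

Definition is_bisim_metric {R : realType} {S A : finType} (rew : S -> A -> R)
  (nxt : S -> A -> S) (gam : R) (d : S -> S -> R) : Prop :=
  forall s t, d s t = bisim_op rew nxt gam d s t.

(* The sampled update sequence: d_0 = 0; step n+1 uses sample x n
   (x 0, x 1, ... are the samples tau_1, tau_2, ...). *)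
Fixpoint d_seq {R : realType} {S A : finType} (rew : S -> A -> R)
  (nxt : S -> A -> S) (gam : R) (x : nat -> (S * S * A)%type) (n : nat)
  : S -> S -> R :=
  match n with
  | 0 => fun _ _ => 0
  | n'.+1 =>
      let d := d_seq rew nxt gam x n' in
      let: (sn, tn, an) := x n' in
      fun s t =>
        if (s == sn) && (t == tn) then
          Num.max (d sn tn)
            (`|rew sn an - rew tn an| + gam * d (nxt sn an) (nxt tn an))
        else d s t
  end.

(* X is an i.i.d. sequence with law D: every event {X n = v} is measurable
   and, for every finite set of distinct indices, the joint law factorises
   as a product of D's (mutual independence + identical distribution D). *)
Definition iid_with_law {R : realType} {dm : measure_display}
  {Omega : measurableType dm} (P : probability Omega R) {T : finType}
  (D : T -> R) (X : nat -> Omega -> T) : Prop :=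
  (forall n v, measurable [set w | X n w = v]) /\
  (forall (I : seq nat) (v : nat -> T), uniq I ->
     P (\bigcap_(i in [set` I]) [set w | X i w = v i])%classic
       = (\prod_(i <- I) D (v i))%:E).

(* Main.v *)
Require Import Defs.
From HB Require Import structures.
From mathcomp Require Import all_boot all_order all_algebra.
From mathcomp Require Import all_classical all_reals all_analysis.
From mathcomp Require Import ring.
Import Order.TTheory GRing.Theory Num.Theory numFieldNormedType.Exports.
Local Open Scope ring_scope.
Local Open Scope classical_set_scope.

Section Det.
Variables (R : realType) (S A : finType) (rew : S -> A -> R) (nxt : S -> A -> S) (gam : R).
Hypothesis hgam0 : 0 <= gam.
Hypothesis hgam1 : gam < 1.
Variable x : nat -> (S * S * A)%type.

Local Notation d := (d_seq rew nxt gam x).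
Local Notation op := (bisim_op rew nxt gam).

Lemma op_ge0 f s t : 0 <= op f s t.
Proof. exact: bigmax_ge_id. Qed.

Lemma op_le f g c : 0 <= c -> (forall s t, f s t <= g s t + c) ->
  forall s t, op f s t <= op g s t + gam * c.
Proof.
move=> c0 hfg s t; apply: bigmax_le => [|a _].
  by rewrite addr_ge0 ?op_ge0 ?mulr_ge0.
apply: (@le_trans _ _ ((`|rew s a - rew t a| + gam * g (nxt s a) (nxt t a)) + gam * c)).
  by rewrite -addrA lerD2l -mulrDr ler_wpM2l.
by rewrite lerD2r /bisim_op; apply: le_bigmax.
Qed.

Lemma d_step n s t : d n s t <= d n.+1 s t.
Proof.
rewrite /=; case: (x n) => [[sn tn] an].
by case: ifP => // /andP[/eqP -> /eqP ->]; rewrite le_max lexx.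
Qed.

Lemma d_mono n m s t : (n <= m)%N -> d n s t <= d m s t.
Proof.
move=> /subnK <-; elim: (m - n)%N => [|k IH] //.
by rewrite addSn; apply: le_trans IH (d_step _ _ _).
Qed.

Arguments d_mono : clear implicits.
Arguments d_mono {n m} s t.

Lemma d_ge0 n s t : 0 <= d n s t.
Proof. exact: (d_mono s t (leq0n n)). Qed.

Lemma d_hit m s t a : x m = (s, t, a) ->
  `|rew s a - rew t a| + gam * d m (nxt s a) (nxt t a) <= d m.+1 s t.
Proof. by move=> /= ->; rewrite !eqxx /= le_max lexx orbT. Qed.

Lemma d_le_dsim dsim : is_bisim_metric rew nxt gam dsim ->
  forall n s t, d n s t <= dsim s t.
Proof.
move=> hd; elim=> [|n IH] s t /=.
  by rewrite hd op_ge0.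
case: (x n) => [[sn tn] an].
case: ifP => [/andP[/eqP -> /eqP ->]|_]; last exact: IH.
rewrite ge_max IH /= hd.
rewrite /bisim_op; apply: le_trans (le_bigmax _ _ an).
by rewrite lerD2l ler_wpM2l.
Qed.

Hypothesis hinf : forall tau N, exists m, (N <= m)%N /\ x m = tau.

Lemma all_hit N (l : seq (S * S * A)%type) :
  exists N', forall tau, tau \in l -> exists m, [/\ (N <= m)%N, (m < N')%N & x m = tau].
Proof.
elim: l => [|tau l [N' IH]]; first by exists 0%N.
have [m [Nm xm]] := hinf tau N.
exists (maxn N' m.+1) => tau'; rewrite inE => /orP[/eqP ->|/IH [k [Nk kN' xk]]].
  by exists m; split => //; rewrite leq_max ltnSn orbT.
by exists k; split => //; rewrite leq_max kN'.
Qed.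

Fixpoint v k : S -> S -> R := match k with 0 => fun _ _ => 0 | k.+1 => op (v k) end.

Lemma v_reach k : exists N, forall n s t, (N <= n)%N -> v k s t <= d n s t.
Proof.
elim: k => [|k [N IH]]; first by exists 0%N => n s t _; exact: d_ge0.
have [N' HN'] := all_hit N (index_enum (S * S * A)%type).
exists N' => n s t hn /=; apply: bigmax_le => [|a _]; first exact: d_ge0.
have [m [Nm mN' xm]] := HN' (s, t, a) (mem_index_enum (s,t,a)).
apply: le_trans (d_mono s t (leq_trans mN' hn)).
apply: le_trans (@d_hit m s t a xm).
by rewrite lerD2l ler_wpM2l // IH.
Qed.

Lemma v_close dsim : is_bisim_metric rew nxt gam dsim ->
  forall M, (forall s t, dsim s t <= M) ->
  forall k s t, dsim s t <= v k s t + gam ^+ k * M.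
Proof.
move=> hd M hM; elim=> [|k IH] s t /=.
  by rewrite expr0 mul1r add0r.
rewrite hd exprS -mulrA; apply: op_le => //.
rewrite mulr_ge0 ?exprn_ge0 //.
exact: le_trans (d_ge0 0 s t) (le_trans (@d_le_dsim dsim hd 0%N s t) (hM s t)).
Qed.


Lemma d_cvg dsim : is_bisim_metric rew nxt gam dsim ->
  forall s t, d n s t @[n --> \oo] --> dsim s t.
Proof.
move=> hd s t.
pose M : R := 1 + \big[Num.max/0]_(p : (S * S)%type) dsim p.1 p.2.
have M0 : 0 < M by rewrite ltr_pwDl // bigmax_ge_id.
have hM : forall s t, dsim s t <= M.
  move=> s' t'; rewrite /M; apply: le_trans (le_bigmax 0 (fun p : (S * S)%type => dsim p.1 p.2) (s', t')) _.
  by rewrite -[X in X <= _]add0r; apply: lerD.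
apply/cvgrPdist_le => eps eps0.
have gn : `|gam| < 1 by rewrite ger0_norm.
have := cvg_expr gn; move/cvgrPdist_le => /(_ (eps / M)).
rewrite divr_gt0 // => /(_ isT).
case=> k _ Hk.
have := Hk k (leqnn k) => /=; rewrite sub0r normrN ger0_norm ?exprn_ge0 // => hk.
have [N HN] := v_reach k.
exists N => // n /= hn.
rewrite ger0_norm ?subr_ge0 ?(@d_le_dsim dsim hd) //.
rewrite lerBlDl; apply: le_trans (@v_close dsim hd M hM k s t) _.
rewrite lerD ?HN //.
by rewrite -ler_pdivlMr.
Qed.

End Det.
Section Prob.
Variables (R : realType) (dm : measure_display) (Omega : measurableType dm)
  (P : probability Omega R) (T : finType) (D : T -> R) (X : nat -> Omega -> T).
Hypothesis hX : iid_with_law P D X.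
Hypothesis hDpos : forall tau, 0 < D tau.
Variable tau : T.

Definition Ev (I : seq nat) (v : nat -> T) (J : seq nat) : set Omega :=
  (\bigcap_(i in [set` I]) [set w | X i w = v i]) `&`
  (\bigcap_(j in [set` J]) ~` [set w | X j w = tau]).

Lemma mEv I v J : measurable (Ev I v J).
Proof.
apply: measurableI; apply: bigcap_measurableType => k _.
  exact: hX.1.
exact/measurableC/hX.1.
Qed.

Lemma P_fin (B : set Omega) : measurable B -> (P B < +oo)%E.
Proof. by move=> mB; apply: (le_lt_trans (probability_le1 P mB)); rewrite ltry. Qed.

Lemma PEv J : forall I v, uniq (I ++ J) ->
  P (Ev I v J) = (\prod_(i <- I) D (v i) * (1 - D tau) ^+ size J)%:E.
Proof.
elim: J => [|j J IH] I v.
  rewrite cats0 => uI; rewrite expr0 mulr1 -(hX.2 I v uI); congr (P _).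
  rewrite /Ev; apply/seteqP; split => w /=; first by case.
  by move=> H; split => // k /=.
move=> uIJ.
have jI : j \notin I.
  by move: uIJ; rewrite cat_uniq /= => /and3P[_ /norP[jI _] _].
have u2 : uniq ((j :: I) ++ J).
  have /permPl hp := perm_catCA I [:: j] J.
  have h := perm_uniq hp; simpl in h.
  by rewrite /= -h.
have u1 : uniq (I ++ J) by move: u2 => /= /andP[].
pose v' := fun i => if i == j then tau else v i.
have Eeq : Ev I v (j :: J) = Ev I v J `\` Ev (j :: I) v' J.
  rewrite /Ev; apply/seteqP; split => w /=.
    move=> [HI HJ]; split.
      split => // k /= kJ; apply: HJ => /=; by rewrite inE kJ orbT.
    move=> [HI' _]; apply: (HJ j); first by rewrite /= inE eqxx.
    by have := HI' j; rewrite /= inE eqxx /v' eqxx => ->.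
  move=> [[HI HJ] Hn]; split => // k /=; rewrite inE => /orP[/eqP ->|kJ]; last exact: HJ.
  move=> xj; apply: Hn; split => // i /=; rewrite inE => /orP[/eqP ->|iI].
    by rewrite /v' eqxx.
  have : i != j by apply: contraNneq jI => <-.
  by rewrite /v' => /negPf ->; apply: HI.
have Isub : Ev I v J `&` Ev (j :: I) v' J = Ev (j :: I) v' J.
  apply/setIidr => w [HI HJ]; split => // i iI.
  have ij : i != j by apply: contraNneq jI => <-.
  rewrite /= (HI i) /=; last by rewrite inE iI orbT.
  by rewrite /v' (negPf ij).
have hD : P (Ev I v J `\` Ev (j :: I) v' J) =
    (P (Ev I v J) - P (Ev I v J `&` Ev (j :: I) v' J))%E.
  by apply: measureD; [exact: mEv|exact: mEv|exact/P_fin/mEv].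
rewrite Eeq hD.
rewrite Isub (IH I v u1) (IH (j :: I) v' u2) big_cons /v' eqxx.
have -> : \prod_(i <- I) D (if i == j then tau else v i) = \prod_(i <- I) D (v i).
  rewrite big_seq_cond [RHS]big_seq_cond; apply: eq_bigr => i /andP[iI _].
  by case: eqP => // ij; move: iI; rewrite ij (negPf jI).
rewrite -EFinB /= exprS; congr (_%:E); ring.
Qed.

Definition E N : set Omega :=
  \bigcap_(m in [set m | (N <= m)%N]) ~` [set w | X m w = tau].

Lemma mE N : measurable (E N).
Proof. by apply: bigcap_measurableType => k _; exact/measurableC/hX.1. Qed.

Lemma PE0 N : P (E N) = 0%E.
Proof.
pose q := 1 - D tau.
have q0 : 0 <= q.
  have := PEv [:: 0%N] [::] (fun _ => tau) isT.
  rewrite big_nil mul1r expr1 => h.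
  by rewrite -lee_fin -h; exact: measure_ge0.
have q1 : q < 1 by rewrite /q ltrBlDr ltrDl.
have bound : forall K, (P (E N) <= (q ^+ K)%:E)%E.
  move=> K; have := PEv (iota N K) [::] (fun _ => tau).
  rewrite /= iota_uniq big_nil mul1r size_iota => /(_ isT) <-.
  apply: le_measure; rewrite ?inE; [exact: mE|exact: mEv|].
  move=> w Ew; split => // k /=; rewrite mem_iota => /andP[Nk _].
  exact: Ew.
have ge0 : (0 <= P (E N))%E by exact: measure_ge0.
move: ge0 bound; case: (P (E N)) => [r| |] //; last first.
  by move=> _ /(_ 0%N); rewrite expr0.
rewrite lee_fin => r0 hb; congr (_%:E); apply/eqP; rewrite eq_le r0 andbT.
rewrite leNgt; apply/negP => rpos.
have qn : `|q| < 1 by rewrite ger0_norm.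
have := cvg_expr qn; move/cvgrPdist_lt => /(_ r rpos).
case=> K _ HK.
have := HK K (leqnn K) => /=; rewrite sub0r normrN ger0_norm ?exprn_ge0 // => hK.
by have := hb K; rewrite lee_fin leNgt hK.
Qed.

End Prob.

Theorem theorem4 (R : realType) (S A : finType)
  (rew : S -> A -> R) (nxt : S -> A -> S) (gam : R)
  (hgam0 : 0 <= gam) (hgam1 : gam < 1)
  (dsim : S -> S -> R) (hdsim : is_bisim_metric rew nxt gam dsim)
  (D : (S * S * A)%type -> R) (hDpos : forall tau, 0 < D tau)
  (hDsum : \sum_(tau : (S * S * A)%type) D tau = 1)
  (dm : measure_display) (Omega : measurableType dm) (P : probability Omega R)
  (X : nat -> Omega -> (S * S * A)%type) (hX : iid_with_law P D X) :
  {ae P, forall w, forall s t : S,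
     (d_seq rew nxt gam (fun k => X k w) n s t) @[n --> \oo] --> dsim s t}.
Proof.
pose F : (set Omega)^nat := fun k =>
  match (unpickle k : option ((S * S * A)%type * nat)) with
  | Some (tau, N) => E dm Omega _ X tau N
  | None => set0 end.
rewrite nearE /almost_everywhere.
apply: (@negligibleS _ _ _ P (\bigcup_k F k)); last first.
  apply: negligible_bigcup.
  move=> k; rewrite /F; case: unpickle => [[tau N]|]; last exact: negligible_set0.
  apply/negligibleP; first exact: (mE _ _ _ _ _ _ _ hX).
  exact: (PE0 _ _ _ _ _ _ _ hX hDpos).
move=> w /= Hw.
have : ~ (forall tau N, exists m, (N <= m)%N /\ X m w = tau).
  by move=> hinf; apply: Hw => s t; exact: (d_cvg _ _ _ _ _ _ hgam0 hgam1 _ hinf _ hdsim).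
move=> /existsNP [tau] /existsNP [N] Hn.
exists (pickle (tau, N)) => //; rewrite /F pickleK /E => m /= Nm Xm.
by apply: Hn; exists m; split.
Qed.
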